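(* Let $W$ be a $k[G_m]$-module and suppose $0\to U\to M(W)\to V\to0$ is an exact sequence of $\mathrm{FI}_G$-modules in which $U$ is generated in degree $\le m$. Then $U$ and $V$ are both relatively projective.
   Context: Fix a commutative ring $k$ and a group $G$. $\mathrm{FI}_G$ is the category with objects $[n]$ ($n\ge0$) and morphisms $[n]\to[m]$ the pairs $(f,g)$ with $f$ injective and $g:[n]\to G$ a map of sets; composition $(f,g)\circ(f',g')=(f\circ f',h)$, $h(x)=g'(x)\,g(f'(x))$. $G_n=\mathfrak S_n\wr G=\mathrm{Aut}_{\mathrm{FI}_G}([n])$. An $\mathrm{FI}_G$-module is a functor $V:\mathrm{FI}_G\to\mathrm{Mod}_k$. For a $k[G_n]$-module $W$, $M(W)$ is the $\mathrm{FI}_G$-module with $M(W)_p=W\otimes_{k[G_n]}k[\mathrm{Hom}_{\mathrm{FI}_G}([n],[p])]$, morphisms acting by postcomposition; $M(n):=M(k[G_n])$; modules of the form $\bigoplus_n M(W_n)$ are relatively projective. $V$ is generated in degree $\le m$ if there is a surjection $\bigoplus M(n_i)\to V$ with all $n_i\le m$. *)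

(* Defs.v *)
From HB Require Import structures.
From mathcomp Require Import all_boot all_order all_algebra.
Set Implicit Arguments. Unset Strict Implicit. Unset Printing Implicit Defensive.
Import GRing.Theory.
Local Open Scope ring_scope.

Section FIG.
Variables (k : comPzRingType) (G : groupType).

Record FIGhom (n p : nat) := FIGHom {
  hf : 'I_n -> 'I_p;
  hg : 'I_n -> G;
  hf_inj : injective hf }.

Definition FIGid (n : nat) : FIGhom n n :=
  @FIGHom n n id (fun _ => 1%g) (@inj_id _).

Definition FIGcomp (n p q : nat) (phi : FIGhom p q) (psi : FIGhom n p) : FIGhom n q :=
  @FIGHom n q (hf phi \o hf psi)
    (fun x => (hg psi x * hg phi (hf psi x))%g)
    (inj_comp (@hf_inj _ _ phi) (@hf_inj _ _ psi)).

(* A k[G_n]-module, G_n = Aut([n]) = Hom([n],[n]) (every endomorphism of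
   [n] in FI_G is an automorphism); left action, product = composition. *)
Record kGmod (n : nat) := KGmod {
  kgV :> lmodType k;
  kgact : FIGhom n n -> kgV -> kgV;
  kgact_lin : forall s, linear (kgact s);
  kgact_id : forall w, kgact (FIGid n) w = w;
  kgact_comp : forall s t w, kgact (FIGcomp s t) w = kgact s (kgact t w) }.

Record FIGmod := FIGMod {
  Vobj :> nat -> lmodType k;
  Vact : forall n p, FIGhom n p -> Vobj n -> Vobj p;
  Vact_lin : forall n p (phi : FIGhom n p), linear (Vact phi);
  Vact_id : forall n x, Vact (FIGid n) x = x;
  Vact_comp : forall n p q (phi : FIGhom p q) (psi : FIGhom n p) x,
      Vact (FIGcomp phi psi) x = Vact phi (Vact psi x) }.

Record FIGnat (U V : FIGmod) := FIGNat {
  nt : forall n, U n -> V n;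
  nt_lin : forall n, linear (@nt n);
  nt_nat : forall n p (phi : FIGhom n p) x,
      nt (Vact phi x) = Vact phi (nt x) }.

(* gamma : W x Hom([n],[p]) -> Z is k-linear in W and k[G_n]-balanced,
   i.e. it is a k[G_n]-balanced map on W x k[Hom([n],[p])] (given on basis). *)
Definition balanced (n p : nat) (W : kGmod n) (Z : lmodType k)
    (gamma : W -> FIGhom n p -> Z) : Prop :=
  (forall h, linear (fun w => gamma w h)) /\
  (forall s w h, gamma (kgact s w) h = gamma w (FIGcomp h s)).

(* (T, beta) is the tensor product W (x)_{k[G_n]} k[Hom([n],[p])]
   (universal balanced map). *)
Definition is_tensor (n p : nat) (W : kGmod n) (T : lmodType k)
    (beta : W -> FIGhom n p -> T) : Prop :=
  balanced beta /\
  forall (Z : lmodType k) (gamma : W -> FIGhom n p -> Z), balanced gamma ->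
    exists t : T -> Z, [/\ linear t,
      (forall w h, t (beta w h) = gamma w h) &
      (forall t' : T -> Z, linear t' ->
         (forall w h, t' (beta w h) = gamma w h) -> t' =1 t)].

(* X is M(W): X_p = W (x)_{k[G_m]} k[Hom([m],[p])] (via beta p), morphisms
   acting by postcomposition. *)
Definition is_M (m : nat) (W : kGmod m) (X : FIGmod)
    (beta : forall p, W -> FIGhom m p -> X p) : Prop :=
  (forall p, is_tensor (beta p)) /\
  (forall p q (phi : FIGhom p q) w h,
      Vact phi (beta p w h) = beta q w (FIGcomp phi h)).

(* V is relatively projective: V is (isomorphic to) a direct sum
   \bigoplus_n M(W_n); degreewise V_p = \bigoplus_n W_n (x) k[Hom([n],[p])]. *)
Definition rel_proj (V : FIGmod) : Prop :=
  exists (Ws : forall n, kGmod n)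
         (beta : forall n p, Ws n -> FIGhom n p -> V p),
  [/\ (forall n p, balanced (beta n p)),
      (forall p (Z : lmodType k) (gamma : forall n, Ws n -> FIGhom n p -> Z),
         (forall n, balanced (gamma n)) ->
         exists t : V p -> Z, [/\ linear t,
           (forall n w h, t (beta n p w h) = gamma n w h) &
           (forall t' : V p -> Z, linear t' ->
              (forall n w h, t' (beta n p w h) = gamma n w h) -> t' =1 t)]) &
      (forall n p q (phi : FIGhom p q) w h,
         Vact phi (beta n p w h) = beta n q w (FIGcomp phi h))].

Definition gen_in_deg_le (V : FIGmod) (m : nat) : Prop :=
  forall p (x : V p),
    exists s : seq {n : nat & (k * FIGhom n p * V n)%type},
      all (fun t => projT1 t <= m)%N s /\
      x = \sum_(t <- s) ((projT2 t).1.1 *: Vact (projT2 t).1.2 (projT2 t).2).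

End FIG.

(* Main.v *)
Require Import Defs.
From HB Require Import structures.
From mathcomp Require Import all_boot all_order all_algebra.
From Stdlib Require Import FunctionalExtensionality ProofIrrelevance ClassicalEpsilon.
Set Implicit Arguments. Unset Strict Implicit. Unset Printing Implicit Defensive.
Import GRing.Theory.
Local Open Scope ring_scope.

Section Lin.
Variables (k : comPzRingType) (A B : lmodType k) (f : A -> B) (Hf : linear f).
Lemma linD x y : f (x + y) = f x + f y.
Proof. by have := Hf 1 x y; rewrite !scale1r. Qed.
Lemma lin0 : f 0 = 0.
Proof. by have := linD 0 0; rewrite addr0 => /eqP; rewrite -subr_eq subrr eq_sym => /eqP. Qed.
Lemma linZ a x : f (a *: x) = a *: f x.
Proof. by have := Hf a x 0; rewrite !addr0 lin0 addr0. Qed.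
Lemma linN x : f (- x) = - f x.
Proof. by rewrite -scaleN1r linZ scaleN1r. Qed.
Lemma linB x y : f (x - y) = f x - f y.
Proof. by rewrite linD linN. Qed.
Lemma lin_sum (I : Type) (r : seq I) (F : I -> A) :
  f (\sum_(i <- r) F i) = \sum_(i <- r) f (F i).
Proof. elim: r => [|a r IH]; rewrite ?big_nil ?lin0 // !big_cons linD IH //. Qed.
End Lin.

Section Hom.
Variables (G : groupType).
Lemma FIGhom_eq n p (a b : FIGhom G n p) :
  (forall x, hf a x = hf b x) -> (forall x, hg a x = hg b x) -> a = b.
Proof.
case: a => fa ga ia; case: b => fb gb ib /= H1 H2.
have ef := functional_extensionality _ _ H1; have eg := functional_extensionality _ _ H2.
subst; f_equal; apply: proof_irrelevance.
Qed.
Lemma FIGcomp_id_r n p (h : FIGhom G n p) : FIGcomp h (FIGid G n) = h.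
Proof. by apply: FIGhom_eq => x //=; rewrite mul1g. Qed.
Lemma FIGcomp_id_l n p (h : FIGhom G n p) : FIGcomp (FIGid G p) h = h.
Proof. by apply: FIGhom_eq => x //=; rewrite mulg1. Qed.
Lemma FIGcompA n p q r (a : FIGhom G q r) (b : FIGhom G p q) (c : FIGhom G n p) :
  FIGcomp (FIGcomp a b) c = FIGcomp a (FIGcomp b c).
Proof. by apply: FIGhom_eq => x //=; rewrite mulgA. Qed.
Lemma FIGhom_le n p (h : FIGhom G n p) : (n <= p)%N.
Proof. by have := leq_card _ (@hf_inj _ _ _ h); rewrite !card_ord. Qed.
End Hom.
Section Decomp.
Variables (k : comPzRingType) (G : groupType) (m : nat) (W : kGmod k G m).

Definition Idx p := {S : {set 'I_p} | #|S| == m}.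
Definition rep p (S : Idx p) : FIGhom G m p.
refine (@FIGHom _ m p (fun i => enum_val (cast_ord (esym (eqP (valP S))) i)) (fun _ => 1%g) _).
by move=> x y /enum_val_inj /cast_ord_inj.
Defined.

Definition im p (h : FIGhom G m p) : {set 'I_p} := [set hf h x | x : 'I_m].
Lemma im_card p (h : FIGhom G m p) : #|im h| == m.
Proof. by rewrite card_imset ?card_ord //; apply: hf_inj. Qed.
Definition idx p (h : FIGhom G m p) : Idx p := exist _ (im h) (im_card h).

Lemma index_lt p (h : FIGhom G m p) x : (index (hf h x) (enum (im h)) < m)%N.
Proof.
have E : size (enum (im h)) = m by rewrite -cardE (eqP (im_card h)).
by rewrite -[X in (_ < X)%N]E index_mem mem_enum; apply: imset_f.
Qed.

Definition sh p (h : FIGhom G m p) : FIGhom G m m.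
refine (@FIGHom _ m m (fun x => insubd x (index (hf h x) (enum (im h)))) (hg h) _).
move=> x y /(congr1 val); rewrite !val_insubd !index_lt => E.
apply: (@hf_inj _ _ _ h).
have Hx : hf h x \in enum (im h) by rewrite mem_enum; apply: imset_f.
have Hy : hf h y \in enum (im h) by rewrite mem_enum; apply: imset_f.
by rewrite -(nth_index (hf h x) Hx) E nth_index.
Defined.

Lemma val_sh p (h : FIGhom G m p) x : val (hf (sh h) x) = index (hf h x) (enum (im h)).
Proof. by rewrite /= val_insubd index_lt. Qed.

Lemma rep_sh p (h : FIGhom G m p) : FIGcomp (rep (idx h)) (sh h) = h.
Proof.
apply: FIGhom_eq => x /=; last by rewrite mulg1.
rewrite (enum_val_nth (hf h x)) /= val_insubd index_lt nth_index //.
by rewrite mem_enum; apply: imset_f.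
Qed.

Lemma im_comp p (h : FIGhom G m p) (s : FIGhom G m m) : im (FIGcomp h s) = im h.
Proof.
apply/eqP; rewrite eqEcard (eqP (im_card h)) (eqP (im_card _)) leqnn andbT.
by apply/subsetP => y /imsetP [x _ ->]; apply: imset_f.
Qed.

Lemma idx_comp p (h : FIGhom G m p) (s : FIGhom G m m) : idx (FIGcomp h s) = idx h.
Proof. by apply: val_inj; rewrite /= im_comp. Qed.

Lemma sh_comp p (h : FIGhom G m p) (s : FIGhom G m m) :
  sh (FIGcomp h s) = FIGcomp (sh h) s.
Proof.
apply: FIGhom_eq => x /=; last by [].
by apply: val_inj; rewrite -/(hf (sh (FIGcomp h s)) x) val_sh val_sh /= im_comp.
Qed.

Local Unset Implicit Arguments.
Variables (X : FIGmod k G) (beta : forall p, W -> FIGhom G m p -> X p)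
  (HX : is_M beta).
Local Set Implicit Arguments.

Lemma Psi_ex p : exists Psi : X p -> {ffun Idx p -> kgV W},
  [/\ linear Psi,
      (forall w h, Psi (beta p w h) =
          [ffun S => if S == idx h then kgact (sh h) w else 0]) &
      (forall x, x = \sum_(S : Idx p) beta p (Psi x S) (rep S))].
Proof.
have [Ht Huniv] := HX.1 p.
pose gamma (w : kgV W) (h : FIGhom G m p) : {ffun Idx p -> kgV W} :=
  [ffun S => if S == idx h then kgact (sh h) w else 0].
have Bg : balanced gamma.
  split.
    move=> h a u v; apply/ffunP => S; rewrite !ffunE.
    by case: ifP => _; rewrite ?kgact_lin // scaler0 addr0.
  by move=> s w h; apply/ffunP => S; rewrite !ffunE idx_comp sh_comp kgact_comp.
have [Psi [Plin PE _]] := Huniv _ gamma Bg.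
exists Psi; split => //.
have [t [tlin tE tU]] := Huniv _ (beta p) Ht.
have Hid := tU id (fun a x y => erefl) (fun w h => erefl).
pose Phi (F : {ffun Idx p -> kgV W}) := \sum_(S : Idx p) beta p (F S) (rep S).
have Philin : linear (fun x => Phi (Psi x)).
  move=> a x y; rewrite /Phi Plin scaler_sumr -big_split /=.
  by apply: eq_bigr => S _; rewrite !ffunE (Ht.1 (rep S)).
have HP := tU _ Philin.
suff HH : forall w h, Phi (Psi (beta p w h)) = beta p w h.
  by move=> x; exact: (etrans (Hid x) (esym (HP HH x))).
move=> w h; rewrite /Phi PE (bigD1 (idx h)) //= ffunE eqxx big1 ?addr0.
  by rewrite Ht.2 rep_sh.
move=> S /negbTE nS; rewrite ffunE nS.
exact: (lin0 (Ht.1 (rep S))).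
Qed.

Definition e (w : kgV W) : X m := beta m w (FIGid G m).

Lemma E1 p w (h : FIGhom G m p) : beta p w h = Vact h (e w).
Proof. by rewrite /e HX.2 FIGcomp_id_r. Qed.

Lemma E2 w (s : FIGhom G m m) : e (kgact s w) = beta m w s.
Proof. by rewrite /e (HX.1 m).1.2 FIGcomp_id_l. Qed.

Lemma e_lin : linear e.
Proof. by move=> a u v; rewrite /e ((HX.1 m).1.1 (FIGid G m)). Qed.

Lemma Esurj (x : X m) : exists w, x = e w.
Proof.
have [Psi [_ _ D]] := Psi_ex m.
exists (\sum_(S : Idx m) kgact (rep S) (Psi x S)).
rewrite (lin_sum e_lin) {1}(D x); apply: eq_bigr => S _.
by rewrite E2.
Qed.

Lemma X0 n (x : X n) : (n < m)%N -> x = 0.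
Proof.
move=> Hn.
have Hno : FIGhom G m n -> False.
  by move=> h; have := FIGhom_le h; rewrite leqNgt Hn.
have [Ht Huniv] := HX.1 n.
have [t [_ _ tU]] := Huniv _ (beta n) Ht.
have h1 := tU id (fun a x y => erefl) (fun w h => False_ind _ (Hno h)).
have l0 : linear (fun _ : X n => (0 : X n)) by move=> a u v; rewrite scaler0 addr0.
have h2 := tU (fun _ => 0) l0 (fun w h => False_ind _ (Hno h)).
by rewrite (h1 x) -(h2 x).
Qed.


Lemma ord_bool_eq (b : bool) (j j' : 'I_b) : j = j'.
Proof.
apply: val_inj; case: j j' => [a Ha] [c Hc] /=.
by case: b Ha Hc => //; case: a => //; case: c.
Qed.

Lemma sum_bool (V : lmodType k) (b : bool) (j0 : 'I_b) (F : 'I_b -> V) :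
  \sum_(j < b) F j = F j0.
Proof.
rewrite (bigD1 j0) //= big1 ?addr0 // => j /negP []; apply/eqP; apply: ord_bool_eq.
Qed.

Lemma ffun_bool (T : Type) (b : bool) (j0 : 'I_b) (f : {ffun 'I_b -> T}) :
  f = [ffun _ => f j0].
Proof. by apply/ffunP => j; rewrite ffunE (ord_bool_eq j j0). Qed.

Definition mkW (M : FIGmod k G) n (b : bool) : kGmod k G n.
refine (@KGmod k G n {ffun 'I_b -> M n} (fun s f => [ffun j => Vact s (f j)]) _ _ _).
- by move=> s a u v; apply/ffunP => j; rewrite !ffunE Vact_lin.
- by move=> w; apply/ffunP => j; rewrite ffunE Vact_id.
- by move=> s t w; apply/ffunP => j; rewrite !ffunE Vact_comp.
Defined.

Lemma rel_proj_of (M : FIGmod k G)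
  (M0 : forall n (x : M n), (n < m)%N -> x = 0)
  (Hex : forall p (Z : lmodType k)
     (gamma : mkW M m (m <= m)%N -> FIGhom G m p -> Z), balanced gamma ->
     exists t : M p -> Z, linear t /\
       forall u h, t (Vact h u) = gamma [ffun _ => u] h)
  (Hgen : forall p (x : M p), exists s : seq (k * FIGhom G m p * M m),
     x = \sum_(t <- s) t.1.1 *: Vact t.1.2 t.2) :
  rel_proj M.
Proof.
exists (fun n => mkW M n (n <= m)%N).
exists (fun n p (f : mkW M n (n <= m)%N) h => \sum_(j < (n <= m)%N) Vact h (f j)).
have jm : 'I_(m <= m)%N by exists 0%N; rewrite leqnn.
have single : forall p (u : M m) (h : FIGhom G m p),
    \sum_(j < (m <= m)%N) Vact h ([ffun _ => u] j) = Vact h u.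
  by move=> p u h; rewrite (sum_bool jm) ffunE.
split.
- move=> n p; split.
    move=> h a u v; rewrite scaler_sumr -big_split /=.
    by apply: eq_bigr => j _; rewrite !ffunE Vact_lin.
  by move=> s w h; apply: eq_bigr => j _; rewrite ffunE Vact_comp.
- move=> p Z gamma Hg.
  have [t [tlin tE]] := Hex p Z (gamma m) (Hg m).
  exists t; split => //.
    move=> n f h; change {ffun 'I_(n <= m)%N -> M n} in f.
    have [lt|nlt] := boolP (n < m)%N; last have [gt|ngt] := boolP (m < n)%N.
    + have f0 : f = 0 by apply/ffunP => j; rewrite ffunE; apply: M0.
      rewrite big1 ?(lin0 tlin); last by move=> j _; rewrite f0 ffunE (lin0 (Vact_lin _)).
      by rewrite f0 (lin0 ((Hg n).1 h)).
    + have nj : 'I_(n <= m)%N -> False by case=> a; rewrite (leqNgt n m) gt.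
      have f0 : f = 0 by apply/ffunP => j; case: (nj j).
      rewrite big1 ?(lin0 tlin); last by move=> j; case: (nj j).
      by rewrite f0 (lin0 ((Hg n).1 h)).
    + have eq : n = m by apply/eqP; rewrite eqn_leq (leqNgt n m) (leqNgt m n) nlt ngt.
      subst n; rewrite (sum_bool jm) tE; congr gamma.
      by rewrite -ffun_bool.
  move=> t' t'lin t'E x; have [s ->] := Hgen p x.
  rewrite (lin_sum t'lin) (lin_sum tlin); apply: eq_bigr => [[[c h] u]] _ /=.
  by rewrite (linZ t'lin) (linZ tlin) tE -(t'E m [ffun _ => u] h) single.
- move=> n p q phi w h; rewrite (lin_sum (Vact_lin phi)).
  by apply: eq_bigr => j _; rewrite Vact_comp.
Qed.

Lemma sum_ffunE (I : finType) (T : Type) (r : seq T) (Mv : lmodType k)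
   (F : T -> {ffun I -> Mv}) (j : I) :
  (\sum_(t <- r) F t) j = \sum_(t <- r) F t j.
Proof. elim: r => [|a r IH]; first by rewrite !big_nil ffunE. by rewrite !big_cons ffunE IH. Qed.

Lemma gamma_pick (M : FIGmod k G) p (Z : lmodType k)
  (gamma : mkW M m (m <= m)%N -> FIGhom G m p -> Z) (Hg : balanced gamma)
  (h : FIGhom G m p) (F : Idx p -> M m) (u : M m) :
  F (idx h) = Vact (sh h) u -> (forall S, S != idx h -> F S = 0) ->
  \sum_(S : Idx p) gamma [ffun _ => F S] (rep S) = gamma [ffun _ => u] h.
Proof.
move=> F1 F0; rewrite (bigD1 (idx h)) //= big1 ?addr0.
  have -> : [ffun _ => F (idx h)] = kgact (sh h) ([ffun _ => u] : mkW M m (m <= m)%N).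
    by apply/ffunP => j; rewrite /= !ffunE F1.
  by rewrite Hg.2 rep_sh.
move=> S /F0 ->.
have -> : [ffun _ => (0 : M m)] = 0 :> mkW M m (m <= m)%N by apply/ffunP => j; rewrite !ffunE.
exact: (lin0 (Hg.1 _)).
Qed.
Local Unset Implicit Arguments.
Variables (U V : FIGmod k G) (i : FIGnat U X) (pi : FIGnat X V)
  (Hi : forall p, injective (@nt _ _ _ _ i p))
  (Hpi : forall p (y : V p), exists x : X p, nt pi x = y)
  (Hexs : forall p (x : X p), nt pi x = 0 <-> exists u : U p, nt i u = x)
  (HU : gen_in_deg_le U m).
Let iL p := @nt_lin _ _ _ _ i p.
Let piL p := @nt_lin _ _ _ _ pi p.
Local Set Implicit Arguments.

Lemma U0 n (u : U n) : (n < m)%N -> u = 0.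
Proof. by move=> lt; apply: (Hi n); rewrite (lin0 (iL n)); apply: X0. Qed.

Lemma V0 n (v : V n) : (n < m)%N -> v = 0.
Proof. by move=> lt; have [x <-] := Hpi n v; rewrite (X0 x lt) (lin0 (piL n)). Qed.

Definition Wp (w : kgV W) := exists u : U m, nt i u = e w.
Lemma Wp0 : Wp 0.
Proof. by exists 0; rewrite (lin0 (iL m)) (lin0 e_lin). Qed.
Lemma WpD a b : Wp a -> Wp b -> Wp (a + b).
Proof. by move=> [u1 H1] [u2 H2]; exists (u1 + u2); rewrite (linD (iL m)) (linD e_lin) H1 H2. Qed.
Lemma WpZ c a : Wp a -> Wp (c *: a).
Proof. by move=> [u1 H1]; exists (c *: u1); rewrite (linZ (iL m)) (linZ e_lin) H1. Qed.

Definition Q (w : kgV W) : U m :=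
  epsilon (inhabits (0 : U m)) (fun u => nt i u = e w).
Lemma QE w : Wp w -> nt i (Q w) = e w.
Proof. by move=> H; apply: (epsilon_spec (inhabits (0 : U m)) (fun u => nt i u = e w)). Qed.
Lemma Q0 : Q 0 = 0.
Proof. by apply: (Hi m); rewrite (QE Wp0) (lin0 (iL m)) (lin0 e_lin). Qed.
Lemma QL c a b : Wp a -> Wp b -> Q (c *: a + b) = c *: Q a + Q b.
Proof.
move=> Ha Hb; apply: (Hi m).
by rewrite (QE (WpD (WpZ c Ha) Hb)) (iL m) (QE Ha) (QE Hb) e_lin.
Qed.
Lemma QS (s : FIGhom G m m) w0 u : nt i u = e w0 -> Q (kgact s w0) = Vact s u.
Proof.
move=> Hu; have Hw : Wp (kgact s w0).
  by exists (Vact s u); rewrite nt_nat Hu E2 E1.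
by apply: (Hi m); rewrite QE // nt_nat Hu E2 E1.
Qed.

Lemma claimC p (Psi : X p -> {ffun Idx p -> kgV W}) :
  linear Psi ->
  (forall w h, Psi (beta p w h) = [ffun S => if S == idx h then kgact (sh h) w else 0]) ->
  forall (x : U p) S, Wp (Psi (nt i x) S).
Proof.
move=> Plin PE x S; have [s [Hs ->]] := HU p x.
rewrite (lin_sum (iL p)) (lin_sum Plin) sum_ffunE.
elim: s Hs => [|t s IH]; first by rewrite big_nil => _; exact: Wp0.
rewrite big_cons /= => /andP [Ht Hs]; apply: WpD; last exact: IH.
case: t Ht => n [[c h] y] /= Hn.
rewrite (linZ (iL p)) (linZ Plin) ffunE; apply: WpZ.
have [lt|nlt] := boolP (n < m)%N.
  by rewrite (U0 y lt) (lin0 (Vact_lin h)) (lin0 (iL p)) (lin0 Plin) ffunE; exact: Wp0.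
have eq : n = m by apply/eqP; rewrite eqn_leq Hn leqNgt nlt.
subst n; have [w0 Hw0] := Esurj (nt i y).
rewrite nt_nat Hw0 -E1 PE ffunE; case: ifP => _; last exact: Wp0.
by exists (Vact (sh h) y); rewrite nt_nat Hw0 E2 E1.
Qed.
Lemma HexU p (Z : lmodType k) (gamma : mkW U m (m <= m)%N -> FIGhom G m p -> Z) :
  balanced gamma ->
  exists t : U p -> Z, linear t /\ forall u h, t (Vact h u) = gamma [ffun _ => u] h.
Proof.
move=> Hg; have [Psi [Plin PE D]] := Psi_ex p.
have C := claimC Plin PE.
exists (fun x => \sum_(S : Idx p) gamma [ffun _ => Q (Psi (nt i x) S)] (rep S)); split.
  move=> a x y; rewrite scaler_sumr -big_split /=; apply: eq_bigr => S _.
  have -> : [ffun _ => Q (Psi (nt i (a *: x + y)) S)] =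
      a *: ([ffun _ => Q (Psi (nt i x) S)] : mkW U m (m <= m)%N) + [ffun _ => Q (Psi (nt i y) S)].
    by apply/ffunP => j; rewrite !ffunE (iL p) Plin !ffunE QL.
  by rewrite (Hg.1 (rep S)).
move=> u h; have [w0 Hw0] := Esurj (nt i u).
apply: gamma_pick => //.
  by rewrite nt_nat Hw0 -E1 PE ffunE eqxx (QS _ Hw0).
by move=> S /negbTE nS; rewrite nt_nat Hw0 -E1 PE ffunE nS Q0.
Qed.

Lemma HgenU p (x : U p) : exists s : seq (k * FIGhom G m p * U m),
     x = \sum_(t <- s) t.1.1 *: Vact t.1.2 t.2.
Proof.
have [s [Hs ->]] := HU p x.
elim: s Hs => [|t s IH]; first by exists [::]; rewrite !big_nil.
rewrite big_cons /= => /andP [Ht Hs]; have [s' ->] := IH Hs.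
case: t Ht => n [[c h] y] /= Hn.
have [lt|nlt] := boolP (n < m)%N.
  by exists s'; rewrite (U0 y lt) (lin0 (Vact_lin h)) scaler0 add0r.
have eq : n = m by apply/eqP; rewrite eqn_leq Hn leqNgt nlt.
by subst n; exists ((c, h, y) :: s'); rewrite big_cons.
Qed.

Lemma HgenV p (y : V p) : exists s : seq (k * FIGhom G m p * V m),
     y = \sum_(t <- s) t.1.1 *: Vact t.1.2 t.2.
Proof.
have [Psi [Plin PE D]] := Psi_ex p.
have [x <-] := Hpi p y.
exists [seq (1, rep Sx, nt pi (e (Psi x Sx))) | Sx <- index_enum (Idx p)].
rewrite big_map {1}(D x) (lin_sum (piL p)); apply: eq_bigr => S _ /=.
by rewrite scale1r E1 nt_nat.
Qed.

Lemma HexV p (Z : lmodType k) (gamma : mkW V m (m <= m)%N -> FIGhom G m p -> Z) :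
  balanced gamma ->
  exists t : V p -> Z, linear t /\ forall u h, t (Vact h u) = gamma [ffun _ => u] h.
Proof.
move=> Hg; have [Psi [Plin PE D]] := Psi_ex p.
have C := claimC Plin PE.
pose T x := \sum_(S : Idx p) gamma [ffun _ => nt pi (e (Psi x S))] (rep S).
have Tlin : linear T.
  move=> a x y; rewrite scaler_sumr -big_split /=; apply: eq_bigr => S _.
  have -> : [ffun _ => nt pi (e (Psi (a *: x + y) S))] =
      a *: ([ffun _ => nt pi (e (Psi x S))] : mkW V m (m <= m)%N) + [ffun _ => nt pi (e (Psi y S))].
    by apply/ffunP => j; rewrite !ffunE Plin !ffunE e_lin (piL m).
  by rewrite (Hg.1 (rep S)).
have Ti : forall u, T (nt i u) = 0.
  move=> u; rewrite /T big1 // => S _.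
  have [u' Hu'] := C u S.
  have -> : [ffun _ => nt pi (e (Psi (nt i u) S))] = 0 :> mkW V m (m <= m)%N.
    apply/ffunP => j; rewrite !ffunE -Hu'.
    by apply/(Hexs m); exists u'.
  exact: (lin0 (Hg.1 _)).
have wd : forall x1 x2, nt pi x1 = nt pi x2 -> T x1 = T x2.
  move=> x1 x2 E; apply/eqP; rewrite -subr_eq0 -(linB Tlin).
  have : nt pi (x1 - x2) = 0 by rewrite (linB (piL p)) E subrr.
  by move/(Hexs p) => [u <-]; rewrite Ti.
pose P y := epsilon (inhabits (0 : X p)) (fun x => nt pi x = y).
have PE' : forall y, nt pi (P y) = y.
  move=> y; apply: (epsilon_spec (inhabits (0 : X p)) (fun x => nt pi x = y)).
  exact: Hpi.
exists (fun y => T (P y)); split.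
  move=> a y1 y2 /=; rewrite -Tlin; apply: wd.
  by rewrite (piL p) !PE'.
move=> v h; have [x0 Hx0] := Hpi m v; have [w0 Hw0] := Esurj x0.
have -> : T (P (Vact h v)) = T (beta p w0 h).
  by apply: wd; rewrite PE' E1 nt_nat -Hw0 Hx0.
apply: gamma_pick => //.
  by rewrite PE ffunE eqxx E2 E1 nt_nat -Hw0 Hx0.
by move=> S /negbTE nS; rewrite PE ffunE nS (lin0 e_lin) (lin0 (piL m)).
Qed.

Lemma main_sec : rel_proj U /\ rel_proj V.
Proof.
split; apply: rel_proj_of.
- exact: U0.
- exact: HexU.
- exact: HgenU.
- exact: V0.
- exact: HexV.
- exact: HgenV.
Qed.
End Decomp.

Theorem mainTheorem15 (k : comPzRingType) (G : groupType) (m : nat)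
  (W : kGmod k G m) (X U V : FIGmod k G)
  (beta : forall p, W -> FIGhom G m p -> X p) (HX : @is_M k G m W X beta)
  (i : FIGnat U X) (pi : FIGnat X V)
  (Hi : forall p, injective (@nt _ _ _ _ i p))
  (Hpi : forall p (y : V p), exists x : X p, nt pi x = y)
  (Hex : forall p (x : X p), nt pi x = 0 <-> exists u : U p, nt i u = x)
  (HU : gen_in_deg_le U m) :
  rel_proj U /\ rel_proj V.
Proof. exact: (main_sec HX Hi Hpi Hex HU). Qed.
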